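(* Let $N\ge1$, $K\ge2$ be integers with $N$ divisible by $K$ ($K$ may be odd or even), put $m=N/K$, and let $\alpha\in[0,2]$. Then $\mathcal{B}_\alpha(N,K)$ has a symmetric equilibrium strategy that induces uniform marginals, and in the resulting equilibrium each player's expected payoff equals $K\cdot\frac{m+\alpha/2}{2m+1}$.
   Context: Fix integers $N\ge1$, $K\ge2$ and a real number $\alpha$. The Colonel Blotto game $\mathcal{B}_\alpha(N,K)$ is the two-player simultaneous-move game with players $A,B$, each with pure strategy set $S=\{s\in\{0,1,\ldots,N\}^K:\sum_{k=1}^K s_k=N\}$, in which the payoff of player $i$ at the pure profile $(s^i,s^{-i})$ is $\pi^i(s^i,s^{-i})=\sum_{k=1}^K\big(\mathbf 1[s^i_k>s^{-i}_k]+\tfrac{\alpha}{2}\mathbf 1[s^i_k=s^{-i}_k]\big)$. Mixed strategies are probability distributions on $S$, with expected payoffs under independent randomization. A symmetric equilibrium strategy is a mixed strategy $\sigma$ such that $(\sigma,\sigma)$ is a Nash equilibrium. For a mixed strategy $\sigma$ and battlefield $k$, the marginal $\sigma_k$ is the distribution of $s_k$ when $s\sim\sigma$; with $m=N/K$, $\sigma$ induces uniform marginals if every $\sigma_k$ is the uniform distribution on $\{0,1,\ldots,2m\}$. *)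

(* Defs.v *)
From HB Require Import structures.
From mathcomp Require Import all_boot all_order all_algebra.
From mathcomp Require Import reals.
Set Implicit Arguments. Unset Strict Implicit. Unset Printing Implicit Defensive.
Import Order.TTheory GRing.Theory Num.Theory.
Local Open Scope ring_scope.

Definition pure (N K : nat) : predArgType :=
  {s : {ffun 'I_K -> 'I_N.+1} | (\sum_(k < K) (s k : nat))%N == N}.

Definition blotto_payoff (R : realType) (alpha : R) (N K : nat)
  (s t : pure N K) : R :=
  \sum_(k < K) ((((val s) k > (val t) k)%N)%:R
                + alpha / 2%:R * (((val s) k == (val t) k) : nat)%:R).

Definition mixed (R : realType) (N K : nat) (sigma : pure N K -> R) : Prop :=
  (forall s, 0 <= sigma s) /\ \sum_(s : pure N K) sigma s = 1.

Definition payoffA (R : realType) (alpha : R) (N K : nat)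
  (sA sB : pure N K -> R) : R :=
  \sum_(s : pure N K) \sum_(t : pure N K) sA s * sB t * blotto_payoff alpha s t.
Definition payoffB (R : realType) (alpha : R) (N K : nat)
  (sA sB : pure N K -> R) : R :=
  \sum_(s : pure N K) \sum_(t : pure N K) sA s * sB t * blotto_payoff alpha t s.

Definition nash (R : realType) (alpha : R) (N K : nat)
  (sA sB : pure N K -> R) : Prop :=
  mixed sA /\ mixed sB /\
  (forall tau, mixed tau -> payoffA alpha tau sB <= payoffA alpha sA sB) /\
  (forall tau, mixed tau -> payoffB alpha sA tau <= payoffB alpha sA sB).

Definition symmetric_equilibrium (R : realType) (alpha : R) (N K : nat)
  (sigma : pure N K -> R) : Prop := nash alpha sigma sigma.

Definition marginal (R : realType) (N K : nat) (sigma : pure N K -> R)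
  (k : 'I_K) (j : 'I_N.+1) : R :=
  \sum_(s : pure N K | (val s) k == j) sigma s.

Definition uniform_marginals (R : realType) (N K : nat)
  (sigma : pure N K -> R) : Prop :=
  forall (k : 'I_K) (j : 'I_N.+1),
    marginal sigma k j =
      if (j <= 2 * (N %/ K))%N then ((2 * (N %/ K)).+1%:R)^-1 else 0.

(* Main.v *)
Require Import Defs.
From HB Require Import structures.
From mathcomp Require Import all_boot all_order all_algebra.
From mathcomp Require Import reals.
From mathcomp Require Import zify ring lra.
Set Implicit Arguments. Unset Strict Implicit. Unset Printing Implicit Defensive.
Import Order.TTheory GRing.Theory Num.Theory.
Definition pv (m K k i : nat) : nat :=
  if odd K && (k < 3) then
    if k == 0 then i
    else if k == 1 then (if i <= m then i + m else i - m.+1)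
    else (if i <= m then 2* m - 2 * i else 4* m + 1 - 2 * i)
  else if odd k then 2* m - i else i.

Lemma pv_lt m K k i : i < (2* m).+1 -> pv m K k i < (2* m).+1.
Proof.
move=> hi; rewrite /pv; case: (odd K && _); [case: (k == 0); [|case: (k == 1)]|case: (odd k)];
 try lia; case: (leqP i m) => ?; lia.
Qed.

Lemma pv_inj m K k i j : i < (2* m).+1 -> j < (2* m).+1 -> pv m K k i = pv m K k j -> i = j.
Proof.
move=> hi hj; rewrite /pv; case: (odd K && _); [case: (k == 0); [|case: (k == 1)]|case: (odd k)];
 try lia; (case: (leqP i m) => ?; case: (leqP j m) => ?; lia).
Qed.

Lemma alt_sum x y a j : \sum_(a <= k < a + 2 * j) (if odd k then x else y) = j * (x + y).
Proof.
elim: j => [|j IH]; first by rewrite muln0 addn0 big_geq.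
rewrite mulnS !addnS big_nat_recr /=; last lia.
rewrite big_nat_recr /=; last lia.
rewrite IH; case: (odd _) => /=; lia.
Qed.

Lemma pv_sum m K i : 2 <= K -> i < (2 * m).+1 -> \sum_(k < K) pv m K k i = K * m.
Proof.
move=> K2 hi; rewrite -(big_mkord xpredT (fun k => pv m K k i)).
have H := odd_double_half K; rewrite -muln2 in H.
case oK: (odd K); rewrite oK /= in H.
- have hK : K = 3 + 2 * (K./2 - 1) by lia.
  rewrite {1}hK (big_cat_nat _ (n:=3)) //=.
  rewrite big_ltn // big_ltn // big_ltn // big_geq // /pv oK /=.
  rewrite (eq_big_nat _ _ (F2 := fun k => if odd k then 2 * m - i else i)); last first.
    move=> k /andP[hk _]; rewrite (_ : k < 3 = false) //; lia.
  rewrite alt_sum (_ : 2 * m - i + i = 2 * m); last lia. case: (leqP i m) => ?; nia.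
- have hK : K = 0 + 2 * K./2 by lia.
  rewrite {1}hK (eq_big_nat _ _ (F2 := fun k => if odd k then 2 * m - i else i)); last first.
    by move=> k _; rewrite /pv oK.
  rewrite alt_sum (_ : 2 * m - i + i = 2 * m); last lia. nia.
Qed.

Definition pord m K k (i : 'I_(2 * m).+1) : 'I_(2 * m).+1 := Ordinal (@pv_lt m K k _ (ltn_ord i)).
Lemma pord_inj m K k : injective (@pord m K k).
Proof. move=> i j /(congr1 val) /= /pv_inj H; apply: val_inj; exact: H. Qed.

Local Open Scope ring_scope.

Definition sig (R : realType) N K m (g : 'I_(2 * m).+1 -> pure N K) : pure N K -> R :=
  fun s => ((2 * m).+1%:R)^-1 * \sum_(i < (2 * m).+1) (g i == s)%:R.

Lemma sig_exp (R : realType) N K m (g : 'I_(2 * m).+1 -> pure N K) (phi : pure N K -> R) :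
  \sum_s sig R g s * phi s = ((2 * m).+1%:R)^-1 * \sum_(i < (2 * m).+1) phi (g i).
Proof.
rewrite /sig.
under eq_bigr do rewrite -mulrA mulr_suml.
rewrite -mulr_sumr exchange_big /=; congr (_ * _); apply: eq_bigr => i _.
rewrite (bigD1 (g i)) //= eqxx mul1r big1 ?addr0 // => s /negbTE.
by rewrite eq_sym => ->; rewrite mul0r.
Qed.

Lemma sig_mixed (R : realType) N K m (g : 'I_(2 * m).+1 -> pure N K) : mixed (sig R g).
Proof.
split.
- move=> s; rewrite /sig mulr_ge0 // ?invr_ge0 ?ler0n // sumr_ge0 // => i _; exact: ler0n.
- have E := sig_exp g (fun _ => 1 : R).
  rewrite (eq_bigr (fun s => sig R g s * 1)) ?E; last by move=> s _; rewrite mulr1.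
  by rewrite sumr_const card_ord mulVf // pnatr_eq0.
Qed.

Lemma sig_marg (R : realType) N K m (g : 'I_(2 * m).+1 -> pure N K)
  (hg : forall i k, (val (g i) k : nat) = pv m K k i) k j :
  marginal (sig R g) k j = if (j <= 2 * m)%N then ((2 * m).+1%:R)^-1 else 0.
Proof.
transitivity (\sum_s sig R g s * ((val s) k == j)%:R).
  rewrite /marginal big_mkcond; apply: eq_bigr => s _.
  by case: ifP; rewrite ?mulr1 ?mulr0.
rewrite sig_exp; case: leqP => hj.
- have hj' : (j < (2 * m).+1)%N by rewrite ltnS.
  rewrite (eq_bigr (fun i => (@pord m K k i == Ordinal hj')%:R)); last first.
    by move=> i _; rewrite -val_eqE /= hg.
  rewrite -(reindex_inj (@pord_inj m K k) (P := xpredT) (F := fun x => (x == Ordinal hj')%:R)) /=.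
  rewrite (bigD1 (Ordinal hj')) //= eqxx big1 ?addr0 ?mulr1 // => i /negbTE ->; done.
- rewrite big1 ?mulr0 // => i _.
  rewrite -val_eqE /= hg; case: eqP => // E; have := @pv_lt m K k _ (ltn_ord i); lia.
Qed.

Lemma sum_lt (y n : nat) : (\sum_(x < n) (x < y)%N = minn y n)%N.
Proof. elim: n => [|n IH]; first by rewrite big_ord0; lia. rewrite big_ord_recr /= IH; case: ltnP => ?; lia. Qed.

Lemma sum_eq (y n : nat) : (\sum_(x < n) (y == x :> nat) = (y < n))%N.
Proof. elim: n => [|n IH]; first by rewrite big_ord0. rewrite big_ord_recr /= IH; case: eqP => ?; lia. Qed.

Lemma sum_G (R : realType) (n y : nat) (c : R) :
  \sum_(x < n) (((y > x)%N)%:R + c * ((y == x :> nat) : nat)%:R) = (minn y n)%:R + c * ((y < n)%N)%:R.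
Proof. by rewrite big_split /= -mulr_sumr -!natr_sum sum_lt sum_eq. Qed.

Lemma sig_E (R : realType) N K m (g : 'I_(2 * m).+1 -> pure N K)
  (hg : forall i k, (val (g i) k : nat) = pv m K k i) (alpha : R) (s : pure N K) :
  \sum_t sig R g t * blotto_payoff alpha s t =
  ((2 * m).+1%:R)^-1 * \sum_(k < K) ((minn (val s k) (2 * m).+1)%:R
       + alpha / 2%:R * ((val s k < (2 * m).+1)%N)%:R).
Proof.
rewrite sig_exp /blotto_payoff exchange_big /=; congr (_ * _); apply: eq_bigr => k _.
rewrite -(sum_G _ _ (alpha / 2%:R)).
rewrite (eq_bigr (fun i => ((val s k > @pord m K k i)%N)%:R
        + alpha / 2%:R * ((val s k == @pord m K k i :> nat) : nat)%:R)); last first.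
  by move=> i _; rewrite -val_eqE /= hg.
by rewrite -(reindex_inj (@pord_inj m K k) (P := xpredT)
   (F := fun x : 'I_(2 * m).+1 => ((val s k > x)%N)%:R + alpha / 2%:R * ((val s k == x :> nat) : nat)%:R)).
Qed.

Definition Vv (R : realType) (N K m : nat) (alpha : R) : R :=
  ((2 * m).+1%:R)^-1 * (N%:R + K%:R * (alpha / 2%:R)).

Lemma E_le (R : realType) N K m (g : 'I_(2 * m).+1 -> pure N K)
  (hg : forall i k, (val (g i) k : nat) = pv m K k i) (alpha : R) (s : pure N K) :
  0 <= alpha ->
  \sum_t sig R g t * blotto_payoff alpha s t <= Vv N K m alpha.
Proof.
move=> ha; have hc : 0 <= alpha / 2%:R by rewrite divr_ge0 ?ler0n.
rewrite (sig_E hg) /Vv ler_wpM2l ?invr_ge0 ?ler0n //.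
have -> : N%:R + K%:R * (alpha / 2%:R) = \sum_(k < K) ((val s k : nat)%:R + alpha / 2%:R).
  by rewrite big_split /= sumr_const card_ord -natr_sum (eqP (valP s)) mulr_natl.
apply: ler_sum => k _; case: (ltnP (val s k) (2 * m).+1) => h.
- by rewrite mulr1.
- rewrite mulr0 addr0.
  have h1 : ((2 * m).+1%:R <= (val s k : nat)%:R :> R) by rewrite ler_nat.
  lra.
Qed.

Lemma E_eq (R : realType) N K m (g : 'I_(2 * m).+1 -> pure N K)
  (hg : forall i k, (val (g i) k : nat) = pv m K k i) (alpha : R) i :
  \sum_t sig R g t * blotto_payoff alpha (g i) t = Vv N K m alpha.
Proof.
rewrite (sig_E hg) /Vv; congr (_ * _).
have -> : N%:R + K%:R * (alpha / 2%:R) = \sum_(k < K) ((val (g i) k : nat)%:R + alpha / 2%:R).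
  by rewrite big_split /= sumr_const card_ord -natr_sum (eqP (valP (g i))) mulr_natl.
apply: eq_bigr => k _.
have h : (val (g i) k < (2 * m).+1)%N by rewrite hg; exact: pv_lt.
by rewrite (minn_idPl (ltnW h)) h mulr1.
Qed.

Lemma payA_le (R : realType) N K m (g : 'I_(2 * m).+1 -> pure N K)
  (hg : forall i k, (val (g i) k : nat) = pv m K k i) (alpha : R) tau :
  0 <= alpha -> mixed tau -> payoffA alpha tau (sig R g) <= Vv N K m alpha.
Proof.
move=> ha [t0 t1]; rewrite /payoffA.
rewrite (eq_bigr (fun s => tau s * \sum_t sig R g t * blotto_payoff alpha s t)); last first.
  by move=> s _; rewrite mulr_sumr; apply: eq_bigr => t _; rewrite mulrA.
apply: (@le_trans _ _ (\sum_s tau s * Vv N K m alpha)).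
  by apply: ler_sum => s _; rewrite ler_wpM2l // E_le.
by rewrite -mulr_suml t1 mul1r.
Qed.

Lemma payA_eq (R : realType) N K m (g : 'I_(2 * m).+1 -> pure N K)
  (hg : forall i k, (val (g i) k : nat) = pv m K k i) (alpha : R) :
  payoffA alpha (sig R g) (sig R g) = Vv N K m alpha.
Proof.
rewrite /payoffA.
rewrite (eq_bigr (fun s => sig R g s * \sum_t sig R g t * blotto_payoff alpha s t)); last first.
  by move=> s _; rewrite mulr_sumr; apply: eq_bigr => t _; rewrite mulrA.
rewrite sig_exp (eq_bigr (fun _ => Vv N K m alpha)); last by move=> i _; rewrite E_eq.
rewrite sumr_const card_ord. by rewrite -[Vv _ _ _ _ *+ _]mulr_natl mulrA mulVf ?mul1r // pnatr_eq0.
Qed.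

Lemma payB_swap (R : realType) N K (alpha : R) (sA sB : pure N K -> R) :
  payoffB alpha sA sB = payoffA alpha sB sA.
Proof.
rewrite /payoffB /payoffA exchange_big; apply: eq_bigr => t _; apply: eq_bigr => s _.
by rewrite (mulrC (sA s)).
Qed.

Theorem proposition5 (R : realType) (N K : nat) (alpha : R) :
  (1 <= N)%N -> (2 <= K)%N -> (K %| N)%N -> 0 <= alpha <= 2 ->
  exists sigma : pure N K -> R,
    symmetric_equilibrium alpha sigma /\ uniform_marginals sigma /\
    payoffA alpha sigma sigma =
      K%:R * (((N %/ K)%:R + alpha / 2) / (2 * (N %/ K)).+1%:R) /\
    payoffB alpha sigma sigma =
      K%:R * (((N %/ K)%:R + alpha / 2) / (2 * (N %/ K)).+1%:R).
Proof.
move=> hN hK hdiv /andP[ha0 ha2].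
set m := (N %/ K)%N.
have hNm : N = (K * m)%N by rewrite /m mulnC divnK.
pose gf (i : 'I_(2 * m).+1) : {ffun 'I_K -> 'I_N.+1} :=
  [ffun k : 'I_K => inord (pv m K k i)].
have gfE i (k : 'I_K) : (gf i k : nat) = pv m K k i.
  rewrite ffunE inordK //; have := @pv_lt m K k _ (ltn_ord i); nia.
have gP i : (\sum_(k < K) (gf i k : nat))%N == N.
  apply/eqP; rewrite (eq_bigr (fun k : 'I_K => pv m K k i)); last by move=> k _; rewrite gfE.
  by rewrite pv_sum // hNm.
pose g (i : 'I_(2 * m).+1) : pure N K := exist _ (gf i) (gP i).
have hg : forall i k, (val (g i) k : nat) = pv m K k i by move=> i k; exact: gfE.
have hV : Vv N K m alpha = K%:R * ((m%:R + alpha / 2) / (2 * m).+1%:R).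
  rewrite /Vv hNm natrM; field; apply: lt0r_neq0; rewrite ltr_wpDr ?mulr_ge0 ?ler0n ?ltr01 //.
exists (sig R g); split; [|split; [|split]].
- split; first exact: sig_mixed.
  split; first exact: sig_mixed.
  split.
  + move=> tau ht; rewrite (payA_eq hg); exact: payA_le.
  + move=> tau ht; rewrite payB_swap payB_swap (payA_eq hg); exact: payA_le.
- by move=> k j; rewrite (sig_marg R hg).
- by rewrite (payA_eq hg).
- by rewrite payB_swap (payA_eq hg).
Qed.
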